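(* Suppose the density $f$ is unimodal and the noise has a unimodal failure rate; let $r^*_0\in\arg\max\{B_r/r:1\le r\le n-1\}$ and $\hat r=\max\{r:\beta_r>0\}$. Let $M^*(\theta)=\max_{{\bf v}\in\mathcal V}M({\bf v},\theta)=\max_{1\le r\le n-1}A_r(\theta)$ and let $x^{**}(\theta)$ be the equilibrium effort under optimal prizes, i.e. $c'(x^{**}(\theta))=M^*(\theta)$. Then: (i) If $\hat r\le\lfloor n/2\rfloor$, then $M^*(\theta)$, and hence $x^{**}(\theta)$, is nonincreasing in $\theta\in[0,1]$. (ii) If $r^*_0>\lceil n/2\rceil$, then $M^*(\theta)$, and hence $x^{**}(\theta)$, is increasing in $\theta\in[0,1]$. (iii) If $\hat r>\lceil n/2\rceil$, then there exists $\bar\theta<1$ such that $M^*(\theta)$, and hence $x^{**}(\theta)$, is increasing in $\theta$ on $[\bar\theta,1]$.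
   Context: Fix an integer $n\ge 2$ and a noise distribution with cdf $F$ and density $f$ on $\mathbb R$ (integrals finite). For $r=1,\dots,n$ let $g_r(u)=u^{n-r}(1-u)^{r-1}$ and $\beta_r=\binom{n-1}{r-1}\int g_r'(F(t))f(t)^2dt$; $B_r=\sum_{k=1}^r\beta_k$, which for $1\le r\le n-1$ equals $r\binom{n-1}{r}\int F(t)^{n-1-r}[1-F(t)]^{r-1}f(t)^2dt>0$. Let $\mathcal V=\{{\bf v}\in\mathbb R^n: v_1\ge\dots\ge v_n\ge 0,\ \sum_r v_r=1\}$, $R({\bf v})=\sum_r\beta_rv_r$, $L({\bf v})=-\frac1n\sum_{r=1}^n\sum_{s<r}(\beta_r+\beta_s)(v_s-v_r)$, $M({\bf v},\theta)=R({\bf v})+\theta L({\bf v})$ for $\theta\in[0,1]$, and $A_r(\theta)=\big[1+\theta\big(\frac{2r}{n}-1\big)\big]\frac{B_r}{r}$ for $1\le r\le n-1$. The effort cost $c$ is strictly increasing, differentiable and strictly convex on $[0,\bar x]$, $\bar x=c^{-1}(1)$, with $c(0)=c'(0)=0$. The failure rate is $h=f/(1-F)$; a function is unimodal if it is (weakly) first increasing then decreasing (monotone functions included); the noise has a unimodal failure rate if $h$ is unimodal. *)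

(* Defs.v *)
From Stdlib Require Import Reals List Lra Lia.
From Coquelicot Require Import Coquelicot.
Open Scope R_scope.

Definition cdf_with_density (F f : R -> R) : Prop :=
  (forall t, 0 <= f t) /\
  (forall t, is_RInt_gen f (Rbar_locally m_infty) (at_point t) (F t)) /\
  is_RInt_gen f (Rbar_locally m_infty) (Rbar_locally p_infty) 1.

Definition g (n r : nat) (u : R) : R := u ^ (n - r) * (1 - u) ^ (r - 1).

Definition beta_integrand (n : nat) (F f : R -> R) (r : nat) (t : R) : R :=
  Derive (g n r) (F t) * (f t) ^ 2.

Definition beta (n : nat) (F f : R -> R) (r : nat) : R :=
  Binomial.C (n - 1) (r - 1) *
  RInt_gen (beta_integrand n F f r) (Rbar_locally m_infty) (Rbar_locally p_infty).

Definition Bsum (n : nat) (F f : R -> R) (r : nat) : R :=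
  fold_right Rplus 0 (map (beta n F f) (seq 1 r)).

Definition A (n : nat) (F f : R -> R) (r : nat) (theta : R) : R :=
  (1 + theta * (2 * INR r / INR n - 1)) * Bsum n F f r / INR r.

(** M*(theta) = max_{1 <= r <= n-1} A_r(theta)  (n >= 2, so the range is nonempty) *)
Definition Mstar (n : nat) (F f : R -> R) (theta : R) : R :=
  fold_right Rmax (A n F f 1 theta) (map (fun r => A n F f r theta) (seq 1 (n - 1))).

(** weakly unimodal on a set P (monotone functions included, via a mode in Rbar) *)
Definition unimodal_on (P : R -> Prop) (h : R -> R) : Prop :=
  exists m : Rbar, forall x y, P x -> P y -> x <= y ->
    (Rbar_le (Finite y) m -> h x <= h y) /\ (Rbar_le m (Finite x) -> h y <= h x).

Definition unimodal (h : R -> R) : Prop := unimodal_on (fun _ => True) h.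

Definition failure_rate (F f : R -> R) (t : R) : R := f t / (1 - F t).

Definition unimodal_failure_rate (F f : R -> R) : Prop :=
  unimodal_on (fun t => F t < 1) (failure_rate F f).

(** dc is the derivative of c relative to the interval [a,b] (one-sided at endpoints) *)
Definition derivative_on (c dc : R -> R) (a b : R) : Prop :=
  forall x, a <= x <= b ->
    filterlim (fun y => (c y - c x) / (y - x))
      (within (fun y => a <= y <= b /\ y <> x) (locally x)) (locally (dc x)).

Definition effort_cost (c dc : R -> R) (xbar : R) : Prop :=
  0 < xbar /\ c xbar = 1 /\ c 0 = 0 /\ dc 0 = 0 /\
  (forall x y, 0 <= x -> x < y -> y <= xbar -> c x < c y) /\
  derivative_on c dc 0 xbar /\
  (forall x y t, 0 <= x <= xbar -> 0 <= y <= xbar -> x <> y -> 0 < t < 1 ->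
     c (t * x + (1 - t) * y) < t * c x + (1 - t) * c y).

Definition equilibrium_effort (n : nat) (F f dc : R -> R) (xbar : R) (xss : R -> R) : Prop :=
  forall theta, 0 <= theta <= 1 ->
    0 <= xss theta <= xbar /\ dc (xss theta) = Mstar n F f theta.

Definition nonincreasing_on01 (h : R -> R) : Prop :=
  forall a b, 0 <= a -> a <= b -> b <= 1 -> h b <= h a.

Definition increasing_on (h : R -> R) (lo hi : R) : Prop :=
  forall a b, lo <= a -> a < b -> b <= hi -> h a < h b.

(* Main.v *)
Require Import Defs.
From Stdlib Require Import Reals Lra Lia List Arith Classical.
From Coquelicot Require Import Coquelicot.
Open Scope R_scope.

Notation MI := (Rbar_locally m_infty).
Notation PI_ := (Rbar_locally p_infty).

Lemma RInt_uniq (f : R -> R) a b l : is_RInt f a b l -> RInt f a b = l.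
Proof. exact (@is_RInt_unique R_CompleteNormedModule f a b l). Qed.

Lemma gen_unpack (h : R -> R) l :
  is_RInt_gen h MI PI_ l -> forall eps, 0 < eps ->
  exists A B, forall a b, a < A -> B < b -> exists y, is_RInt h a b y /\ Rabs (y - l) < eps.
Proof.
  intros H eps Heps.
  assert (Hb : locally l (ball l eps)).
  { apply (locally_ball l (mkposreal eps Heps)). }
  specialize (H _ Hb). destruct H as [Q R0 [A HA] [B HB] HP].
  exists A, B. intros a b Ha Hb'. destruct (HP a b (HA a Ha) (HB b Hb')) as [y [Hy1 Hy2]].
  exists y. split; [exact Hy1| exact Hy2].
Qed.

Lemma cdf_unpack (f : R -> R) t l :
  is_RInt_gen f MI (at_point t) l -> forall eps, 0 < eps ->
  exists A, forall a, a < A -> exists y, is_RInt f a t y /\ Rabs (y - l) < eps.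
Proof.
  intros H eps Heps.
  assert (Hb : locally l (ball l eps)).
  { apply (locally_ball l (mkposreal eps Heps)). }
  specialize (H _ Hb). destruct H as [Q R0 [A HA] HB HP].
  exists A. intros a Ha. destruct (HP a t (HA a Ha) HB) as [y [Hy1 Hy2]].
  exists y. split; [exact Hy1| exact Hy2].
Qed.

Lemma ex_RInt_sub (h : R -> R) a b x y :
  a <= x -> x <= b -> a <= y -> y <= b -> ex_RInt h a b -> ex_RInt h x y.
Proof.
  intros. destruct (Rle_dec x y).
  - apply (@ex_RInt_Chasles_1 R_CompleteNormedModule h x y b). lra.
    apply (@ex_RInt_Chasles_2 R_CompleteNormedModule h a x b). lra. auto.
  - apply ex_RInt_swap. apply (@ex_RInt_Chasles_1 R_CompleteNormedModule h y x b). lra.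
    apply (@ex_RInt_Chasles_2 R_CompleteNormedModule h a y b). lra. auto.
Qed.

Lemma gen_loc_int (h : R -> R) l :
  is_RInt_gen h MI PI_ l -> forall x y, ex_RInt h x y.
Proof.
  intros H x y. destruct (gen_unpack h l H 1 Rlt_0_1) as [A [B HAB]].
  set (a := Rmin A (Rmin x y) - 1). set (b := Rmax B (Rmax x y) + 1).
  destruct (HAB a b) as [v [Hv _]].
  - unfold a. generalize (Rmin_l A (Rmin x y)). lra.
  - unfold b. generalize (Rmax_l B (Rmax x y)). lra.
  - apply ex_RInt_sub with a b.
    + unfold a. generalize (Rmin_r A (Rmin x y)) (Rmin_l x y). lra.
    + unfold b. generalize (Rmax_r B (Rmax x y)) (Rmax_l x y). lra.
    + unfold a. generalize (Rmin_r A (Rmin x y)) (Rmin_r x y). lra.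
    + unfold b. generalize (Rmax_r B (Rmax x y)) (Rmax_r x y). lra.
    + exists v; exact Hv.
Qed.

Lemma gen_ge (h : R -> R) l c :
  is_RInt_gen h MI PI_ l ->
  (exists A B, forall a b, a < A -> B < b -> c <= RInt h a b) -> c <= l.
Proof.
  intros H [A0 [B0 HAB]]. destruct (Rle_dec c l) as [|Hn]; [auto|].
  exfalso. apply Rnot_le_lt in Hn.
  destruct (gen_unpack h l H (c - l)) as [A [B HP]]; [lra|].
  destruct (HP (Rmin A A0 - 1) (Rmax B B0 + 1)) as [y [Hy1 Hy2]].
  - generalize (Rmin_l A A0); lra.
  - generalize (Rmax_l B B0); lra.
  - assert (c <= RInt h (Rmin A A0 - 1) (Rmax B B0 + 1)).
    { apply HAB. generalize (Rmin_r A A0); lra. generalize (Rmax_r B B0); lra. }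
    rewrite (RInt_uniq _ _ _ _ Hy1) in H0.
    apply Rabs_def2 in Hy2. lra.
Qed.

Lemma eq_of_small (d : R) : (forall eps, 0 < eps -> Rabs d < eps) -> d = 0.
Proof.
  intros H. destruct (Req_dec d 0); auto. exfalso.
  specialize (H (Rabs d)). assert (0 < Rabs d) by (apply Rabs_pos_lt; auto). 
  specialize (H H1). lra.
Qed.

Section CDF.
Variables (F f : R -> R).
Hypothesis Hc : cdf_with_density F f.

Lemma f_nonneg : forall t, 0 <= f t.
Proof. destruct Hc as [H _]; auto. Qed.

Lemma f_int : forall x y, ex_RInt f x y.
Proof. destruct Hc as [_ [_ H]]. apply (gen_loc_int f 1 H). Qed.

Lemma F_diff : forall x y, F y - F x = RInt f x y.
Proof.
  intros x y. destruct Hc as [_ [Ht _]].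
  apply Rminus_diag_uniq. apply eq_of_small. intros eps Heps.
  destruct (cdf_unpack f x (F x) (Ht x) (eps/2)) as [A1 H1]; [lra|].
  destruct (cdf_unpack f y (F y) (Ht y) (eps/2)) as [A2 H2]; [lra|].
  set (a := Rmin (Rmin A1 A2) (Rmin x y) - 1).
  assert (a < A1 /\ a < A2).
  { unfold a. generalize (Rmin_l (Rmin A1 A2) (Rmin x y)) (Rmin_l A1 A2) (Rmin_r A1 A2). lra. }
  destruct (H1 a) as [y1 [Hy1 Hy1']]; [lra|].
  destruct (H2 a) as [y2 [Hy2 Hy2']]; [lra|].
  apply RInt_uniq in Hy1. apply RInt_uniq in Hy2.
  assert (RInt f a x + RInt f x y = RInt f a y).
  { apply (RInt_Chasles f a x y); apply f_int. }
  apply Rabs_def2 in Hy1'. apply Rabs_def2 in Hy2'.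
  apply Rabs_def1; lra.
Qed.

Lemma F_mono : forall x y, x <= y -> F x <= F y.
Proof.
  intros. assert (0 <= RInt f x y).
  { apply RInt_ge_0; auto. apply f_int. intros; apply f_nonneg. }
  rewrite <- F_diff in H0. lra.
Qed.

Lemma F_ge0 : forall t, 0 <= F t.
Proof.
  intros t. destruct Hc as [_ [Ht _]].
  destruct (Rle_dec 0 (F t)) as [|Hn]; auto. exfalso. apply Rnot_le_lt in Hn.
  destruct (cdf_unpack f t (F t) (Ht t) (- F t)) as [A1 H1]; [lra|].
  destruct (H1 (Rmin A1 t - 1)) as [y1 [Hy1 Hy1']]. generalize (Rmin_l A1 t); lra.
  apply RInt_uniq in Hy1.
  assert (0 <= RInt f (Rmin A1 t - 1) t).
  { apply RInt_ge_0. generalize (Rmin_r A1 t); lra. apply f_int. intros; apply f_nonneg. }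
  apply Rabs_def2 in Hy1'. lra.
Qed.

Lemma F_to1 : forall eps, 0 < eps -> exists B, forall b, B < b -> Rabs (F b - 1) < eps.
Proof.
  intros eps Heps. destruct Hc as [_ [Ht Htot]].
  destruct (gen_unpack f 1 Htot (eps/2)) as [A [B HAB]]; [lra|].
  exists B. intros b Hb.
  destruct (cdf_unpack f b (F b) (Ht b) (eps/2)) as [A1 H1]; [lra|].
  set (a := Rmin A A1 - 1).
  destruct (H1 a) as [y1 [Hy1 Hy1']]. unfold a; generalize (Rmin_r A A1); lra.
  destruct (HAB a b) as [y2 [Hy2 Hy2']]. unfold a; generalize (Rmin_l A A1); lra. auto.
  apply RInt_uniq in Hy1. apply RInt_uniq in Hy2.
  apply Rabs_def2 in Hy1'. apply Rabs_def2 in Hy2'. apply Rabs_def1; lra.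
Qed.

Lemma F_to0 : forall eps, 0 < eps -> exists A, forall a, a < A -> Rabs (F a) < eps.
Proof.
  intros eps Heps. destruct Hc as [_ [Ht Htot]].
  destruct (gen_unpack f 1 Htot (eps/2)) as [A [B HAB]]; [lra|].
  destruct (F_to1 (eps/2)) as [B1 HB1]; [lra|].
  exists A. intros a Ha.
  set (b := Rmax B B1 + 1).
  destruct (HAB a b) as [y2 [Hy2 Hy2']]; auto. unfold b; generalize (Rmax_l B B1); lra.
  apply RInt_uniq in Hy2.
  assert (Hb := HB1 b). assert (B1 < b) by (unfold b; generalize (Rmax_r B B1); lra).
  specialize (Hb H). rewrite <- F_diff in Hy2.
  apply Rabs_def2 in Hy2'. apply Rabs_def2 in Hb. apply Rabs_def1; lra.
Qed.

Lemma F_le1 : forall t, F t <= 1.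
Proof.
  intros t. destruct (Rle_dec (F t) 1) as [|Hn]; auto. exfalso. apply Rnot_le_lt in Hn.
  destruct (F_to1 (F t - 1)) as [B HB]; [lra|].
  assert (Hb := HB (Rmax B t + 1)). assert (B < Rmax B t + 1) by (generalize (Rmax_l B t); lra).
  specialize (Hb H). assert (F t <= F (Rmax B t + 1)).
  { apply F_mono. generalize (Rmax_r B t); lra. }
  apply Rabs_def2 in Hb. lra.
Qed.

End CDF.

Lemma Rabs_def2b (a b : R) : Rabs a <= b -> - b <= a /\ a <= b.
Proof. intros H. generalize (Rle_abs a) (Rle_abs (- a)). rewrite Rabs_Ropp. lra. Qed.

Lemma lin_ex (f : R -> R) al be x y : ex_RInt f x y -> ex_RInt (fun t => al * f t + be) x y.
Proof.
  intros H. exact (ex_RInt_plus (fun t => scal al (f t)) (fun _ => be) x y (ex_RInt_scal f x y al H) (ex_RInt_const x y be)).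
Qed.

Lemma lin_RInt (f : R -> R) al be x y : ex_RInt f x y ->
  RInt (fun t => al * f t + be) x y = al * RInt f x y + be * (y - x).
Proof.
  intros H.
  change (RInt (fun t => plus (scal al (f t)) ((fun _ => be) t)) x y = al * RInt f x y + be * (y - x)).
  rewrite (@RInt_plus R_CompleteNormedModule). 2: exact (ex_RInt_scal f x y al H). 2: apply ex_RInt_const.
  rewrite (@RInt_scal R_CompleteNormedModule); auto. rewrite (@RInt_const R_CompleteNormedModule).
  change (al * RInt f x y + (y - x) * be = al * RInt f x y + be * (y - x)). ring.
Qed.

Lemma int_bound (f : R -> R) u v Mf : u <= v -> ex_RInt f u v ->
  (forall t, u <= t <= v -> 0 <= f t <= Mf) -> 0 <= RInt f u v <= (v - u) * Mf.
Proof.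
  intros Huv He Hb. split.
  - apply RInt_ge_0; auto. intros; apply Hb; lra.
  - assert (RInt f u v <= RInt (fun _ => Mf) u v).
    { apply RInt_le; auto. apply ex_RInt_const. intros; apply Hb; lra. }
    rewrite (@RInt_const R_CompleteNormedModule) in H. exact H.
Qed.

Lemma deriv_cont (P P1 : R -> R) u : (forall u, is_derive P u (P1 u)) -> continuity_pt P u.
Proof.
  intros H. apply continuity_pt_filterlim. apply (ex_derive_continuous P u).
  exists (P1 u). apply H.
Qed.

Section Local.
Variables (f F P P1 : R -> R) (Mp L : R).
Hypothesis Hfi : forall u v, ex_RInt f u v.
Hypothesis HF : forall u v, F v - F u = RInt f u v.
Hypothesis HF01 : forall t, 0 <= F t <= 1.
Hypothesis HP : forall u, is_derive P u (P1 u).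
Hypothesis HMp : forall u, 0 <= u <= 1 -> Rabs (P1 u) <= Mp.
Hypothesis HL : forall u v, 0 <= u <= 1 -> 0 <= v <= 1 -> Rabs (P1 u - P1 v) <= L * Rabs (u - v).
Hypothesis HL0 : 0 <= L.
Hypothesis Hhi : forall u v, ex_RInt (fun t => P1 (F t) * f t ^ 2) u v.

Lemma local_est (Mf D x y z : R) :
  x <= z <= y ->
  (forall t, x <= t <= y -> 0 <= f t <= Mf) ->
  (forall t, x <= t <= y -> Rabs (f t - f z) <= D) ->
  f z * (P (F y) - P (F x)) - (y - x) * (Mp * Mf * D) - 2 * L * Mf ^ 3 * (y - x) ^ 2
    <= RInt (fun t => P1 (F t) * f t ^ 2) x y.
Proof.
  intros Hz Hfb HD.
  assert (HFt : forall t, x <= t <= y -> Rabs (F t - F z) <= Mf * (y - x)).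
  { intros t Ht. rewrite HF. destruct (Rle_dec z t).
    - destruct (int_bound f z t Mf) as [h1 h2]; auto. intros; apply Hfb; lra.
      rewrite Rabs_right by lra. assert ((t - z) * Mf <= Mf * (y - x)).
      { assert (0 <= Mf) by (destruct (Hfb z); lra). nra. } lra.
    - destruct (int_bound f t z Mf) as [h1 h2]; auto. lra. intros; apply Hfb; lra.
      rewrite <- (opp_RInt_swap f t z) by auto.
      change (Rabs (- RInt f t z) <= Mf * (y - x)). rewrite Rabs_Ropp.
      rewrite Rabs_right by lra. assert ((z - t) * Mf <= Mf * (y - x)).
      { assert (0 <= Mf) by (destruct (Hfb z); lra). nra. } lra. }
  assert (HMf : 0 <= Mf) by (destruct (Hfb z); lra).
  assert (Hfz := Hfb z Hz).
  assert (HFxy : 0 <= F y - F x <= Mf * (y - x)).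
  { rewrite HF. rewrite (Rmult_comm Mf). apply int_bound; auto; lra. }
  assert (HFxz : 0 <= F z - F x) by (rewrite HF; apply int_bound with Mf; auto; [lra| intros; apply Hfb; lra]).
  assert (HFzy : 0 <= F y - F z) by (rewrite HF; apply int_bound with Mf; auto; [lra| intros; apply Hfb; lra]).
  set (c := P1 (F z)).
  assert (Hc : Rabs c <= Mp) by (apply HMp; auto).
  set (K := Mp * Mf * D + L * Mf ^ 3 * (y - x)).
  assert (Hpt : forall t, x < t < y -> c * f z * f t + - K <= P1 (F t) * f t ^ 2).
  { intros t Ht.
    assert (Ht' : x <= t <= y) by lra.
    destruct (Hfb t Ht') as [ft0 ftM].
    assert (e1 : Rabs (P1 (F t) - c) <= L * (Mf * (y - x))).
    { eapply Rle_trans. apply HL; auto. apply Rmult_le_compat_l; auto. }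
    apply Rabs_def2b in e1.
    assert (h1 : (c - L * (Mf * (y - x))) * f t ^ 2 <= P1 (F t) * f t ^ 2).
    { apply Rmult_le_compat_r. apply pow2_ge_0. lra. }
    assert (h2 : L * (Mf * (y - x)) * f t ^ 2 <= L * Mf ^ 3 * (y - x)).
    { assert (f t ^ 2 <= Mf ^ 2) by (apply pow_incr; lra).
      assert (0 <= L * (Mf * (y - x))) by (apply Rmult_le_pos; auto; apply Rmult_le_pos; lra).
      apply Rmult_le_compat_l with (r := L * (Mf * (y - x))) in H; auto.
      replace (L * Mf ^ 3 * (y - x)) with (L * (Mf * (y - x)) * Mf ^ 2) by ring. auto. }
    assert (h3 : Rabs (c * f t * (f t - f z)) <= Mp * Mf * D).
    { rewrite !Rabs_mult. rewrite (Rabs_right (f t)) by lra.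
      apply Rmult_le_compat; auto using Rabs_pos.
      apply Rmult_le_pos; auto using Rabs_pos. apply Rmult_le_compat; auto using Rabs_pos. }
    apply Rabs_def2b in h3.
    assert (c * f t ^ 2 = c * f z * f t + c * f t * (f t - f z)) by ring.
    unfold K. nra. }
  assert (Hint : RInt (fun t => c * f z * f t + - K) x y <= RInt (fun t => P1 (F t) * f t ^ 2) x y).
  { apply RInt_le; auto. lra. apply lin_ex; auto. }
  rewrite lin_RInt in Hint by auto. rewrite <- HF in Hint.
  destruct (MVT_gen P (F x) (F y) P1) as [xi [Hxi Heq]].
  { intros; apply HP. }
  { intros; apply (deriv_cont P P1); auto. }
  rewrite Rmin_left in Hxi by lra. rewrite Rmax_right in Hxi by lra.
  assert (e2 : Rabs (P1 xi - c) <= L * (F y - F x)).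
  { eapply Rle_trans. apply HL. split. destruct (HF01 x); lra. destruct (HF01 y); lra. apply HF01.
    apply Rmult_le_compat_l; auto. apply Rabs_le. lra. }
  apply Rabs_def2b in e2.
  assert (h4 : c * (F y - F x) >= (P (F y) - P (F x)) - L * (Mf * (y - x)) * (Mf * (y - x))).
  { rewrite Heq.
    assert ((P1 xi - c) * (F y - F x) <= L * (F y - F x) * (F y - F x)).
    { apply Rmult_le_compat_r; lra. }
    assert (L * (F y - F x) * (F y - F x) <= L * (Mf * (y - x)) * (Mf * (y - x))).
    { apply Rmult_le_compat; try nra. }
    nra. }
  assert (h5 : f z * (c * (F y - F x)) >= f z * (P (F y) - P (F x)) - L * Mf ^ 3 * (y - x) ^ 2).
  { assert (f z * (L * (Mf * (y - x)) * (Mf * (y - x))) <= Mf * (L * (Mf * (y - x)) * (Mf * (y - x)))).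
    { apply Rmult_le_compat_r. apply Rmult_le_pos. apply Rmult_le_pos; auto. apply Rmult_le_pos; lra. apply Rmult_le_pos; lra. lra. }
    assert (f z * (c * (F y - F x)) >= f z * ((P (F y) - P (F x)) - L * (Mf * (y - x)) * (Mf * (y - x)))).
    { apply Rle_ge. apply Rmult_le_compat_l. lra. lra. }
    replace (L * Mf ^ 3 * (y - x) ^ 2) with (Mf * (L * (Mf * (y - x)) * (Mf * (y - x)))) by ring.
    nra. }
  unfold K in Hint. nra.
Qed.

Lemma arch_lemma (X C : R) : (forall N, (0 < N)%nat -> - C / INR N <= X) -> 0 <= X.
Proof.
  intros H. destruct (Rle_dec 0 X) as [|Hn]; auto. apply Rnot_le_lt in Hn. exfalso.
  destruct (archimed_cor1 (- X / (Rabs C + 1))) as [N [HN1 HN2]].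
  { apply Rdiv_lt_0_compat. lra. generalize (Rabs_pos C); lra. }
  specialize (H N HN2). assert (0 < INR N) by (apply lt_0_INR; auto).
  assert (C / INR N <= Rabs C * / INR N).
  { unfold Rdiv. apply Rmult_le_compat_r. left; apply Rinv_0_lt_compat; auto. apply Rle_abs. }
  assert (Rabs C * / INR N <= Rabs C * (- X / (Rabs C + 1))).
  { apply Rmult_le_compat_l. apply Rabs_pos. lra. }
  assert (Rabs C * (- X / (Rabs C + 1)) < - X).
  { unfold Rdiv. rewrite <- Rmult_assoc. rewrite (Rmult_comm (Rabs C)). rewrite Rmult_assoc.
    assert (Rabs C * / (Rabs C + 1) < 1).
    { apply (Rmult_lt_reg_r (Rabs C + 1)). generalize (Rabs_pos C); lra.
      rewrite Rmult_assoc, Rinv_l. lra. generalize (Rabs_pos C); lra. }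
    assert (0 < - X) by lra. nra. }
  lra.
Qed.

Definition grid (a b : R) (N k : nat) := a + INR k * ((b - a) / INR N).

Lemma grid_bounds a b N k : a <= b -> (0 < N)%nat -> (k <= N)%nat -> a <= grid a b N k <= b.
Proof.
  intros Hab HN Hk. unfold grid. assert (0 < INR N) by (apply lt_0_INR; auto).
  assert (INR k <= INR N) by (apply le_INR; auto). assert (0 <= INR k) by apply pos_INR.
  assert (0 <= (b - a) / INR N) by (apply Rdiv_le_0_compat; lra).
  split. nra.
  assert (INR k * ((b - a) / INR N) <= INR N * ((b - a) / INR N)) by (apply Rmult_le_compat_r; auto).
  replace (INR N * ((b - a) / INR N)) with (b - a) in H3 by (field; lra). lra.
Qed.

Lemma grid_S a b N k : grid a b N (S k) = grid a b N k + (b - a) / INR N.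
Proof. unfold grid. rewrite S_INR. ring. Qed.

Lemma grid_0 a b N : grid a b N 0 = a.
Proof. unfold grid. simpl. ring. Qed.

Lemma grid_N a b N : (0 < N)%nat -> grid a b N N = b.
Proof. intros. unfold grid. assert (0 < INR N) by (apply lt_0_INR; auto). field. lra. Qed.

Let h := fun t => P1 (F t) * f t ^ 2.

Lemma Chas (u v w : R) : RInt h u w = RInt h u v + RInt h v w.
Proof. symmetry. apply (@RInt_Chasles R_CompleteNormedModule h u v w); apply Hhi. Qed.

Lemma core_inc (a b : R) : a <= b ->
  (forall t, a <= t <= b -> 0 <= f t) ->
  (forall x y, a <= x -> x <= y -> y <= b -> f x <= f y) ->
  (forall t, a <= t <= b -> P (F t) <= P (F b)) ->
  0 <= RInt h a b.
Proof.
  intros Hab Hf0 Hmon HPsi.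
  set (Mf := f b).
  apply (arch_lemma _ ((b - a) * (Mp * Mf * (f b - f a) + 2 * L * Mf ^ 3 * (b - a)))).
  intros N HN.
  set (hN := (b - a) / INR N).
  assert (HINR : 0 < INR N) by (apply lt_0_INR; auto).
  assert (HhN : 0 <= hN) by (unfold hN; apply Rdiv_le_0_compat; lra).
  assert (Hclaim : forall k, (k <= N)%nat ->
    f (grid a b N k) * (P (F (grid a b N k)) - P (F b)) - hN * (Mp * Mf * (f (grid a b N k) - f a))
      - INR k * (2 * L * Mf ^ 3 * hN ^ 2) <= RInt h a (grid a b N k)).
  { induction k as [|k IH]; intros Hk.
    - rewrite grid_0. unfold h. rewrite RInt_point. simpl.
      assert (0 <= f a) by (apply Hf0; lra). assert (P (F a) <= P (F b)) by (apply HPsi; lra).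
      assert (f a * (P (F a) - P (F b)) <= 0) by nra.
      change (zero : R) with 0. lra.
    - assert (Hk' : (k <= N)%nat) by lia. specialize (IH Hk').
      destruct (grid_bounds a b N k Hab HN Hk') as [g1 g2].
      destruct (grid_bounds a b N (S k) Hab HN Hk) as [g3 g4].
      rewrite grid_S in g3, g4 |- *.
      set (xk := grid a b N k) in *. fold hN in g3, g4 |- *.
      assert (Hloc := local_est Mf (f (xk + hN) - f xk) xk (xk + hN) xk).
      rewrite (Chas a xk (xk + hN)).
      assert (Hl : f xk * (P (F (xk + hN)) - P (F xk)) - (xk + hN - xk) * (Mp * Mf * (f (xk + hN) - f xk)) -
        2 * L * Mf ^ 3 * (xk + hN - xk) ^ 2 <= RInt (fun t => P1 (F t) * f t ^ 2) xk (xk + hN)).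
      { apply Hloc.
        - lra.
        - intros t Ht. split. apply Hf0; lra. apply Hmon; lra.
        - intros t Ht. assert (f xk <= f t) by (apply Hmon; lra). assert (f t <= f (xk + hN)) by (apply Hmon; lra).
          rewrite Rabs_right; lra. }
      fold h in Hl.
      replace (xk + hN - xk) with hN in Hl by ring.
      rewrite S_INR.
      assert (f xk <= f (xk + hN)) by (apply Hmon; lra).
      assert (P (F (xk + hN)) <= P (F b)) by (apply HPsi; lra).
      assert ((f (xk + hN) - f xk) * (P (F (xk + hN)) - P (F b)) <= 0).
      { assert (0 <= f (xk + hN) - f xk) by lra. assert (P (F (xk + hN)) - P (F b) <= 0) by lra. nra. }
      nra. }
  specialize (Hclaim N (le_n N)). rewrite grid_N in Hclaim by auto.
  assert (Hexp : hN * (Mp * Mf * (f b - f a)) + INR N * (2 * L * Mf ^ 3 * hN ^ 2) =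
     (b - a) * (Mp * Mf * (f b - f a) + 2 * L * Mf ^ 3 * (b - a)) / INR N).
  { unfold hN. field. lra. }
  unfold Rdiv in *. lra.
Qed.

Lemma core_dec (a b : R) : a <= b ->
  (forall t, a <= t <= b -> 0 <= f t) ->
  (forall x y, a <= x -> x <= y -> y <= b -> f y <= f x) ->
  (forall t, a <= t <= b -> P (F a) <= P (F t)) ->
  0 <= RInt h a b.
Proof.
  intros Hab Hf0 Hmon HPsi.
  set (Mf := f a).
  apply (arch_lemma _ ((b - a) * (Mp * Mf * (f a - f b) + 2 * L * Mf ^ 3 * (b - a)))).
  intros N HN.
  set (hN := (b - a) / INR N).
  assert (HINR : 0 < INR N) by (apply lt_0_INR; auto).
  assert (HhN : 0 <= hN) by (unfold hN; apply Rdiv_le_0_compat; lra).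
  assert (Hclaim : forall k, (k <= N)%nat ->
    f (grid a b N k) * (P (F (grid a b N k)) - P (F a)) - hN * (Mp * Mf * (f a - f (grid a b N k)))
      - INR k * (2 * L * Mf ^ 3 * hN ^ 2) <= RInt h a (grid a b N k)).
  { induction k as [|k IH]; intros Hk.
    - rewrite grid_0. unfold h. rewrite RInt_point. simpl.
      change (zero : R) with 0. lra.
    - assert (Hk' : (k <= N)%nat) by lia. specialize (IH Hk').
      destruct (grid_bounds a b N k Hab HN Hk') as [g1 g2].
      destruct (grid_bounds a b N (S k) Hab HN Hk) as [g3 g4].
      rewrite grid_S in g3, g4 |- *.
      set (xk := grid a b N k) in *. fold hN in g3, g4 |- *.
      assert (Hloc := local_est Mf (f xk - f (xk + hN)) xk (xk + hN) (xk + hN)).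
      rewrite (Chas a xk (xk + hN)).
      assert (Hl : f (xk + hN) * (P (F (xk + hN)) - P (F xk)) - (xk + hN - xk) * (Mp * Mf * (f xk - f (xk + hN))) -
        2 * L * Mf ^ 3 * (xk + hN - xk) ^ 2 <= RInt (fun t => P1 (F t) * f t ^ 2) xk (xk + hN)).
      { apply Hloc.
        - lra.
        - intros t Ht. split. apply Hf0; lra. apply Hmon; lra.
        - intros t Ht. assert (f t <= f xk) by (apply Hmon; lra). assert (f (xk + hN) <= f t) by (apply Hmon; lra).
          rewrite Rabs_right; lra. }
      fold h in Hl.
      replace (xk + hN - xk) with hN in Hl by ring.
      rewrite S_INR.
      assert (f (xk + hN) <= f xk) by (apply Hmon; lra).
      assert (P (F a) <= P (F xk)) by (apply HPsi; lra).
      assert ((f xk - f (xk + hN)) * (P (F xk) - P (F a)) >= 0).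
      { assert (0 <= f xk - f (xk + hN)) by lra. assert (0 <= P (F xk) - P (F a)) by lra. nra. }
      nra. }
  specialize (Hclaim N (le_n N)). rewrite grid_N in Hclaim by auto.
  assert (f b * (P (F b) - P (F a)) >= 0).
  { assert (0 <= f b) by (apply Hf0; lra). assert (P (F a) <= P (F b)) by (apply HPsi; lra). nra. }
  assert (Hexp : hN * (Mp * Mf * (f a - f b)) + INR N * (2 * L * Mf ^ 3 * hN ^ 2) =
     (b - a) * (Mp * Mf * (f a - f b) + 2 * L * Mf ^ 3 * (b - a)) / INR N).
  { unfold hN. field. lra. }
  unfold Rdiv in *. lra.
Qed.
End Local.

Lemma G_lemma (F f P P1 : R -> R) (Mp L m0 l : R) :
  cdf_with_density F f ->
  (forall u, is_derive P u (P1 u)) ->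
  (forall u, 0 <= u <= 1 -> Rabs (P1 u) <= Mp) ->
  (forall u v, 0 <= u <= 1 -> 0 <= v <= 1 -> Rabs (P1 u - P1 v) <= L * Rabs (u - v)) ->
  0 <= L ->
  is_RInt_gen (fun t => P1 (F t) * f t ^ 2) MI PI_ l ->
  (forall x y, x <= y -> y <= m0 -> f x <= f y) ->
  (forall x y, m0 <= x -> x <= y -> f y <= f x) ->
  (forall t, t <= m0 -> P (F t) <= P (F m0)) ->
  (forall t, m0 <= t -> P (F m0) <= P (F t)) ->
  0 <= l.
Proof.
  intros Hc HP HMp HL HL0 Hgen Hinc Hdec Hl Hr.
  assert (Hhi := gen_loc_int _ _ Hgen).
  assert (Hfi := f_int F f Hc). assert (HF := F_diff F f Hc).
  assert (HF01 : forall t, 0 <= F t <= 1) by (intros; split; [apply (F_ge0 F f Hc)| apply (F_le1 F f Hc)]).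
  apply (gen_ge _ _ 0 Hgen). exists m0, m0. intros a b Ha Hb.
  rewrite <- (@RInt_Chasles R_CompleteNormedModule _ a m0 b) by apply Hhi.
  change (0 <= RInt (fun t => P1 (F t) * f t ^ 2) a m0 + RInt (fun t => P1 (F t) * f t ^ 2) m0 b).
  apply Rplus_le_le_0_compat.
  - apply (core_inc f F P P1 Mp L Hfi HF HF01 HP HMp HL HL0 Hhi a m0). lra.
    intros; apply (f_nonneg F f Hc).
    intros; apply Hinc; lra.
    intros; apply Hl; lra.
  - apply (core_dec f F P P1 Mp L Hfi HF HF01 HP HMp HL HL0 Hhi m0 b). lra.
    intros; apply (f_nonneg F f Hc).
    intros; apply Hdec; lra.
    intros; apply Hr; lra.
Qed.

Lemma RInt_lb (f : R -> R) u v c : u <= v -> ex_RInt f u v -> (forall t, u <= t <= v -> c <= f t) ->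
  (v - u) * c <= RInt f u v.
Proof.
  intros. assert (RInt (fun _ => c) u v <= RInt f u v).
  { apply RInt_le; auto. apply ex_RInt_const. intros; apply H1; lra. }
  rewrite (@RInt_const R_CompleteNormedModule) in H2. exact H2.
Qed.

Lemma f_pos_somewhere (F f : R -> R) : cdf_with_density F f -> exists t0, 0 < f t0.
Proof.
  intros Hc. destruct (classic (exists t0, 0 < f t0)) as [|Hn]; auto. exfalso.
  assert (Hz : forall t, f t <= 0).
  { intros t. destruct (Rle_dec (f t) 0); auto. exfalso. apply Hn. exists t. lra. }
  destruct (F_to1 F f Hc (1/2)) as [B HB]; [lra|].
  destruct (F_to0 F f Hc (1/2)) as [A HA]; [lra|].
  set (a := Rmin A B - 1). set (b := Rmax A B + 1).
  assert (h1 := HB b). assert (h2 := HA a).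
  assert (B < b) by (unfold b; generalize (Rmax_r A B); lra).
  assert (a < A) by (unfold a; generalize (Rmin_l A B); lra).
  specialize (h1 H). specialize (h2 H0).
  assert (a <= b) by (unfold a, b; generalize (Rmin_l A B) (Rmax_l A B); lra).
  assert (RInt f a b <= RInt (fun _ => 0) a b).
  { apply RInt_le; [auto | apply (f_int F f Hc) | apply ex_RInt_const | intros; apply Hz]. }
  rewrite (@RInt_const R_CompleteNormedModule) in H2. change (RInt f a b <= (b - a) * 0) in H2.
  rewrite <- (F_diff F f Hc) in H2. apply Rabs_def2 in h1. apply Rabs_def2 in h2. lra.
Qed.

Lemma mode_finite (F f : R -> R) : cdf_with_density F f -> unimodal f ->
  exists m0, (forall x y, x <= y -> y <= m0 -> f x <= f y) /\ (forall x y, m0 <= x -> x <= y -> f y <= f x).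
Proof.
  intros Hc [m Hm].
  destruct (f_pos_somewhere F f Hc) as [t0 Ht0].
  destruct m as [m0| |].
  - exists m0. split.
    + intros x y Hxy Hy. apply (proj1 (Hm x y I I Hxy)). simpl. auto.
    + intros x y Hx Hxy. apply (proj2 (Hm x y I I Hxy)). simpl. auto.
  - exfalso. set (b := t0 + 2 / f t0).
    assert (t0 <= b) by (unfold b; assert (0 < 2 / f t0) by (apply Rdiv_lt_0_compat; lra); lra).
    assert ((b - t0) * f t0 <= RInt f t0 b).
    { apply RInt_lb; auto. apply (f_int F f Hc). intros t Ht. apply (proj1 (Hm t0 t I I (proj1 Ht))). simpl; auto. }
    rewrite <- (F_diff F f Hc) in H0.
    replace ((b - t0) * f t0) with 2 in H0 by (unfold b; field; lra).
    generalize (F_le1 F f Hc b) (F_ge0 F f Hc t0). lra.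
  - exfalso. set (a := t0 - 2 / f t0).
    assert (a <= t0) by (unfold a; assert (0 < 2 / f t0) by (apply Rdiv_lt_0_compat; lra); lra).
    assert ((t0 - a) * f t0 <= RInt f a t0).
    { apply RInt_lb; auto. apply (f_int F f Hc). intros t Ht. apply (proj2 (Hm t t0 I I (proj2 Ht))). simpl; auto. }
    rewrite <- (F_diff F f Hc) in H0.
    replace ((t0 - a) * f t0) with 2 in H0 by (unfold a; field; lra).
    generalize (F_le1 F f Hc t0) (F_ge0 F f Hc a). lra.
Qed.

Definition gp (a b : nat) (u : R) := u ^ a * (1 - u) ^ b.
Definition gp1 (a b : nat) (u : R) := INR a * gp (pred a) b u - INR b * gp a (pred b) u.
Definition gp2 (a b : nat) (u : R) := INR a * gp1 (pred a) b u - INR b * gp1 a (pred b) u.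

Lemma gp_deriv a b u : is_derive (gp a b) u (gp1 a b u).
Proof.
  unfold gp, gp1, gp. auto_derive. auto. replace (1 + - u) with (1 - u) by (unfold Rminus; reflexivity). unfold Rminus. ring.
Qed.

Lemma gp1_deriv a b u : is_derive (gp1 a b) u (gp2 a b u).
Proof.
  unfold gp1 at 1, gp2.
  apply (is_derive_minus (fun u => INR a * gp (pred a) b u) (fun u => INR b * gp a (pred b) u)).
  - apply (is_derive_scal (gp (pred a) b)). apply gp_deriv.
  - apply (is_derive_scal (gp a (pred b))). apply gp_deriv.
Qed.

Lemma pow_le1 (x : R) (n : nat) : 0 <= x <= 1 -> x ^ n <= 1.
Proof.
  intros Hx. induction n; simpl. lra.
  assert (0 <= x ^ n) by (apply pow_le; lra). nra.
Qed.

Lemma gp_bound a b u : 0 <= u <= 1 -> 0 <= gp a b u <= 1.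
Proof.
  intros Hu. unfold gp.
  assert (0 <= u ^ a <= 1) by (split; [apply pow_le; lra| apply pow_le1; lra]).
  assert (0 <= (1 - u) ^ b <= 1) by (split; [apply pow_le; lra| apply pow_le1; lra]).
  split; nra.
Qed.

Lemma gp1_bound a b u : 0 <= u <= 1 -> Rabs (gp1 a b u) <= INR a + INR b.
Proof.
  intros Hu. unfold gp1. assert (h1 := gp_bound (pred a) b u Hu). assert (h2 := gp_bound a (pred b) u Hu).
  assert (0 <= INR a) by apply pos_INR. assert (0 <= INR b) by apply pos_INR.
  apply Rabs_le. split; nra.
Qed.

Lemma gp2_bound a b u : 0 <= u <= 1 ->
  Rabs (gp2 a b u) <= INR a * (INR (pred a) + INR b) + INR b * (INR a + INR (pred b)).
Proof.
  intros Hu. unfold gp2. assert (h1 := gp1_bound (pred a) b u Hu). assert (h2 := gp1_bound a (pred b) u Hu).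
  assert (0 <= INR a) by apply pos_INR. assert (0 <= INR b) by apply pos_INR.
  eapply Rle_trans. apply Rabs_triang. rewrite Rabs_Ropp, !Rabs_mult. rewrite (Rabs_right (INR a)), (Rabs_right (INR b)) by lra.
  apply Rplus_le_compat; apply Rmult_le_compat_l; auto.
Qed.

Lemma lip_from_deriv (P1 P2 : R -> R) (L : R) :
  (forall u, is_derive P1 u (P2 u)) -> (forall u, 0 <= u <= 1 -> Rabs (P2 u) <= L) ->
  forall u v, 0 <= u <= 1 -> 0 <= v <= 1 -> Rabs (P1 u - P1 v) <= L * Rabs (u - v).
Proof.
  intros HD HB u v Hu Hv.
  destruct (MVT_gen P1 v u P2) as [c [Hc Heq]].
  - intros; apply HD.
  - intros. apply continuity_pt_filterlim. apply (ex_derive_continuous P1). exists (P2 x). apply HD.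
  - rewrite Heq. rewrite Rabs_mult. apply Rmult_le_compat_r. apply Rabs_pos. apply HB.
    split. apply Rle_trans with (Rmin v u). apply Rmin_glb; lra. apply Hc.
    apply Rle_trans with (Rmax v u). apply Hc. apply Rmax_lub; lra.
Qed.

Lemma g_is_gp n r : g n r = gp (n - r) (r - 1).
Proof. reflexivity. Qed.

Lemma Derive_g n r x : Derive (g n r) x = gp1 (n - r) (r - 1) x.
Proof. apply is_derive_unique. apply gp_deriv. Qed.

Section Sign.
Variables (n : nat) (F f : R -> R).
Hypothesis Hn : (2 <= n)%nat.
Hypothesis Hc : cdf_with_density F f.
Hypothesis Hex : forall r, (1 <= r <= n)%nat ->
     ex_RInt_gen (beta_integrand n F f r) MI PI_.

Definition I k : R := RInt_gen (beta_integrand n F f k) MI PI_.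

Lemma I_correct k : (1 <= k <= n)%nat -> is_RInt_gen (beta_integrand n F f k) MI PI_ (I k).
Proof. intros. unfold I. exact (@RInt_gen_correct R_CompleteNormedModule _ _ _ _ _ (Hex k H)). Qed.
Lemma beta_I k : beta n F f k = Binomial.C (n - 1) (k - 1) * I k.
Proof. reflexivity. Qed.

Lemma GA (al ga : R) (j j' : nat) (m0 : R) :
  (1 <= j <= n)%nat -> (1 <= j' <= n)%nat ->
  (forall x y, x <= y -> y <= m0 -> f x <= f y) ->
  (forall x y, m0 <= x -> x <= y -> f y <= f x) ->
  (forall t, t <= m0 -> al * gp (n - j) (j - 1) (F t) + ga * gp (n - j') (j' - 1) (F t)
        <= al * gp (n - j) (j - 1) (F m0) + ga * gp (n - j') (j' - 1) (F m0)) ->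
  (forall t, m0 <= t -> al * gp (n - j) (j - 1) (F m0) + ga * gp (n - j') (j' - 1) (F m0)
        <= al * gp (n - j) (j - 1) (F t) + ga * gp (n - j') (j' - 1) (F t)) ->
  0 <= al * I j + ga * I j'.
Proof.
  intros Hj Hj' Hinc Hdec Hl Hr.
  set (a := (n - j)%nat). set (b := (j - 1)%nat). set (a' := (n - j')%nat). set (b' := (j' - 1)%nat).
  set (P := fun u => al * gp a b u + ga * gp a' b' u).
  set (P1 := fun u => al * gp1 a b u + ga * gp1 a' b' u).
  set (P2 := fun u => al * gp2 a b u + ga * gp2 a' b' u).
  assert (HP : forall u, is_derive P u (P1 u)).
  { intros u. apply (is_derive_plus (fun u => al * gp a b u) (fun u => ga * gp a' b' u)).
    apply (is_derive_scal (gp a b)). apply gp_deriv.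
    apply (is_derive_scal (gp a' b')). apply gp_deriv. }
  assert (HP1 : forall u, is_derive P1 u (P2 u)).
  { intros u. apply (is_derive_plus (fun u => al * gp1 a b u) (fun u => ga * gp1 a' b' u)).
    apply (is_derive_scal (gp1 a b)). apply gp1_deriv.
    apply (is_derive_scal (gp1 a' b')). apply gp1_deriv. }
  set (Mp := Rabs al * (INR a + INR b) + Rabs ga * (INR a' + INR b')).
  set (L := Rabs al * (INR a * (INR (pred a) + INR b) + INR b * (INR a + INR (pred b)))
          + Rabs ga * (INR a' * (INR (pred a') + INR b') + INR b' * (INR a' + INR (pred b')))).
  assert (HMp : forall u, 0 <= u <= 1 -> Rabs (P1 u) <= Mp).
  { intros u Hu. unfold P1, Mp. eapply Rle_trans. apply Rabs_triang. rewrite !Rabs_mult.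
    apply Rplus_le_compat; apply Rmult_le_compat_l; auto using Rabs_pos, gp1_bound. }
  assert (HB2 : forall u, 0 <= u <= 1 -> Rabs (P2 u) <= L).
  { intros u Hu. unfold P2, L. eapply Rle_trans. apply Rabs_triang. rewrite !Rabs_mult.
    apply Rplus_le_compat; apply Rmult_le_compat_l; auto using Rabs_pos, gp2_bound. }
  assert (HL0 : 0 <= L).
  { eapply Rle_trans. apply Rabs_pos. apply (HB2 0). lra. }
  assert (HL := lip_from_deriv P1 P2 L HP1 HB2).
  assert (Hgen : is_RInt_gen (fun t => P1 (F t) * f t ^ 2) MI PI_ (al * I j + ga * I j')).
  { assert (H1 := is_RInt_gen_scal _ al _ (I_correct j Hj)).
    assert (H2 := is_RInt_gen_scal _ ga _ (I_correct j' Hj')).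
    assert (H3 := is_RInt_gen_plus _ _ _ _ H1 H2).
    eapply is_RInt_gen_ext. 2: exact H3.
    apply (Filter_prod _ _ _ (fun _ => True) (fun _ => True)). exists 0; auto. exists 0; auto.
    intros x y _ _ t _. unfold beta_integrand. rewrite !Derive_g. unfold P1.
    change (al * (gp1 a b (F t) * f t ^ 2) + ga * (gp1 a' b' (F t) * f t ^ 2) =
      (al * gp1 a b (F t) + ga * gp1 a' b' (F t)) * f t ^ 2). ring. }
  apply (G_lemma F f P P1 Mp L m0 _ Hc HP HMp HL HL0 Hgen Hinc Hdec); auto.
Qed.

Hypothesis Hunim : unimodal f.

Lemma I_n_nonpos : I n <= 0.
Proof.
  destruct (mode_finite F f Hc Hunim) as [m0 [Hinc Hdec]].
  assert (H := GA (-1) 0 n n m0).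
  replace (n - n)%nat with 0%nat in H by lia.
  assert (HF01 : forall t, 0 <= F t <= 1) by (intros; split; [apply (F_ge0 F f Hc)| apply (F_le1 F f Hc)]).
  assert (0 <= -1 * I n + 0 * I n).
  { apply H; auto; try lia.
    - intros t Ht. unfold gp. simpl. assert (F t <= F m0) by (apply (F_mono F f Hc); auto).
      assert ((1 - F m0) ^ (n - 1) <= (1 - F t) ^ (n - 1)).
      { apply pow_incr. generalize (HF01 m0); lra. }
      lra.
    - intros t Ht. unfold gp. simpl. assert (F m0 <= F t) by (apply (F_mono F f Hc); auto).
      assert ((1 - F t) ^ (n - 1) <= (1 - F m0) ^ (n - 1)).
      { apply pow_incr. generalize (HF01 t); lra. }
      lra. }
  lra.
Qed.

Lemma D_sign (a b : nat) (um u : R) : 0 < um < 1 -> 0 <= u <= 1 ->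
  (u <= um -> gp (S a) b u / gp (S a) b um - gp a (S b) u / gp a (S b) um <= 0) /\
  (um <= u -> 0 <= gp (S a) b u / gp (S a) b um - gp a (S b) u / gp a (S b) um).
Proof.
  intros Hum Hu.
  assert (h1 : 0 < um ^ a) by (apply pow_lt; lra).
  assert (h2 : 0 < (1 - um) ^ b) by (apply pow_lt; lra).
  assert (Heq : gp (S a) b u / gp (S a) b um - gp a (S b) u / gp a (S b) um =
     (u ^ a * (1 - u) ^ b) / (um ^ a * (1 - um) ^ b) * ((u - um) / (um * (1 - um)))).
  { unfold gp. simpl. field. repeat split; lra. }
  rewrite Heq.
  assert (0 <= (u ^ a * (1 - u) ^ b) / (um ^ a * (1 - um) ^ b)).
  { apply Rdiv_le_0_compat. apply Rmult_le_pos; apply pow_le; lra. apply Rmult_lt_0_compat; auto. }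
  assert (0 < um * (1 - um)) by (apply Rmult_lt_0_compat; lra).
  split; intros.
  - assert ((u - um) / (um * (1 - um)) <= 0). { unfold Rdiv. assert (0 < / (um * (1 - um))) by (apply Rinv_0_lt_compat; auto). nra. } nra.
  - apply Rmult_le_pos; auto. apply Rdiv_le_0_compat; lra.
Qed.

Lemma J_step (m0 : R) (j : nat) :
  (forall x y, x <= y -> y <= m0 -> f x <= f y) ->
  (forall x y, m0 <= x -> x <= y -> f y <= f x) ->
  0 < F m0 < 1 -> (1 <= j)%nat -> (S j <= n)%nat ->
  I (S j) / gp (n - S j) (S j - 1) (F m0) <= I j / gp (n - j) (j - 1) (F m0).
Proof.
  intros Hinc Hdec Hum Hj HjS.
  destruct (Nat.lt_exists_pred 0 (n - j)) as [a [Ha _]]. lia.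
  destruct (Nat.lt_exists_pred 0 j) as [b [Hb _]]. lia.
  replace (n - S j)%nat with a by lia. replace (S j - 1)%nat with (S b) by lia.
  rewrite Ha. replace (j - 1)%nat with b by lia.
  assert (HF01 : forall t, 0 <= F t <= 1) by (intros; split; [apply (F_ge0 F f Hc)| apply (F_le1 F f Hc)]).
  assert (G1 : 0 < gp (S a) b (F m0)) by (unfold gp; apply Rmult_lt_0_compat; apply pow_lt; lra).
  assert (G2 : 0 < gp a (S b) (F m0)) by (unfold gp; apply Rmult_lt_0_compat; apply pow_lt; lra).
  assert (H := GA (/ gp (S a) b (F m0)) (- / gp a (S b) (F m0)) j (S j) m0).
  rewrite Ha in H. replace (j - 1)%nat with b in H by lia.
  replace (n - S j)%nat with a in H by lia. replace (S j - 1)%nat with (S b) in H by lia.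
  assert (0 <= / gp (S a) b (F m0) * I j + - / gp a (S b) (F m0) * I (S j)).
  { apply H; auto; try lia.
    - intros t Ht. assert (F t <= F m0) by (apply (F_mono F f Hc); auto).
      destruct (D_sign a b (F m0) (F t) Hum (HF01 t)) as [D1 _].
      specialize (D1 H0). unfold Rdiv in D1.
      replace (/ gp (S a) b (F m0) * gp (S a) b (F m0) + - / gp a (S b) (F m0) * gp a (S b) (F m0)) with 0
        by (field; lra). lra.
    - intros t Ht. assert (F m0 <= F t) by (apply (F_mono F f Hc); auto).
      destruct (D_sign a b (F m0) (F t) Hum (HF01 t)) as [_ D2].
      specialize (D2 H0). unfold Rdiv in D2.
      replace (/ gp (S a) b (F m0) * gp (S a) b (F m0) + - / gp a (S b) (F m0) * gp a (S b) (F m0)) with 0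
        by (field; lra). lra. }
  unfold Rdiv. lra.
Qed.

Lemma sign_pos (k s : nat) : (1 <= k)%nat -> (k < s)%nat -> (s <= n)%nat -> 0 < I s -> 0 <= I k.
Proof.
  intros Hk Hks Hs HIs.
  destruct (mode_finite F f Hc Hunim) as [m0 [Hinc Hdec]].
  assert (HF01 : forall t, 0 <= F t <= 1) by (intros; split; [apply (F_ge0 F f Hc)| apply (F_le1 F f Hc)]).
  destruct (HF01 m0) as [h0 h1].
  destruct (Rle_lt_or_eq_dec 0 (F m0) h0) as [Hp | H0].
  - destruct (Rle_lt_or_eq_dec (F m0) 1 h1) as [Hq | H1].
    +
      set (G := fun j => gp (n - j) (j - 1) (F m0)).
      assert (HG : forall j, 0 < G j) by (intros; unfold G, gp; apply Rmult_lt_0_compat; apply pow_lt; lra).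
      assert (Hchain : forall d, (k + d <= s)%nat -> I s / G s <= I (s - d)%nat / G (s - d)%nat).
      { induction d; intros Hd.
        - replace (s - 0)%nat with s by lia. lra.
        - eapply Rle_trans. apply IHd; lia.
          replace (s - d)%nat with (S (s - S d)) by lia.
          apply (J_step m0); auto; lia. }
      specialize (Hchain (s - k)%nat ltac:(lia)). replace (s - (s - k))%nat with k in Hchain by lia.
      assert (0 < I s / G s) by (apply Rdiv_lt_0_compat; auto).
      assert (0 < I k / G k) by lra.
      specialize (HG k). unfold Rdiv in H0.
      assert (I k = I k / G k * G k) by (field; lra). nra.
    +
      exfalso.
      assert (H := GA (-1) 0 s s m0).
      assert (0 <= -1 * I s + 0 * I s).
      { apply H; auto; try lia.
        - intros t Ht. rewrite H1. unfold gp.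
          replace (s - 1)%nat with (S (s - 2)) by lia. simpl.
          assert (0 <= F t ^ (n - s) * (1 - F t) ^ (S (s - 2))).
          { apply Rmult_le_pos; apply pow_le; generalize (HF01 t); lra. }
          simpl in H0. lra.
        - intros t Ht. assert (F m0 <= F t) by (apply (F_mono F f Hc); auto).
          assert (F t = 1) by (generalize (HF01 t); lra). rewrite H2, H1. lra. }
      lra.
  -
    assert (H := GA 1 0 k k m0).
    assert (0 <= 1 * I k + 0 * I k).
    { apply H; auto; try lia.
      - intros t Ht. assert (F t <= F m0) by (apply (F_mono F f Hc); auto).
        assert (F t = 0) by (generalize (HF01 t); lra). rewrite H2, <- H0. lra.
      - intros t Ht. rewrite <- H0. unfold gp.
        replace (n - k)%nat with (S (n - k - 1)) by lia. simpl.
        assert (0 <= F t ^ (n - k) * (1 - F t) ^ (k - 1)).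
        { apply Rmult_le_pos; apply pow_le; generalize (HF01 t); lra. }
        replace (n - k)%nat with (S (n - k - 1)) in H1 by lia. simpl in H1. lra. }
    lra.
Qed.
End Sign.

Section Pos.
Variables (n : nat) (F f : R -> R).
Hypothesis Hn : (2 <= n)%nat.
Hypothesis Hc : cdf_with_density F f.
Hypothesis Hex : forall r, (1 <= r <= n)%nat ->
     ex_RInt_gen (beta_integrand n F f r) MI PI_.
Hypothesis Hunim : unimodal f.

Lemma F_cont : continuity F.
Proof.
  destruct (mode_finite F f Hc Hunim) as [m0 [Hinc Hdec]].
  set (M := f m0).
  assert (Hb : forall t, 0 <= f t <= M).
  { intros t. split. apply (f_nonneg F f Hc). unfold M. destruct (Rle_dec t m0).
    apply Hinc; lra. apply Hdec; lra. }
  assert (HL : forall x y, x <= y -> 0 <= F y - F x <= (y - x) * M).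
  { intros. rewrite (F_diff F f Hc). apply int_bound; auto. apply (f_int F f Hc). }
  intros x. unfold continuity_pt, continue_in, limit1_in, limit_in. simpl. unfold R_dist.
  intros eps Heps. exists (eps / (M + 1)). split.
  { apply Rdiv_lt_0_compat; auto. generalize (Hb 0); lra. }
  intros y [_ Hy]. assert (0 <= M) by (generalize (Hb 0); lra).
  assert (Hd : eps / (M + 1) * M < eps).
  { apply Rlt_le_trans with (eps / (M + 1) * (M + 1)). apply Rmult_lt_compat_l.
    apply Rdiv_lt_0_compat; lra. lra. right; field; lra. }
  destruct (Rle_dec x y).
  - destruct (HL x y r). rewrite Rabs_right in Hy by lra. rewrite Rabs_right by lra.
    assert ((y - x) * M <= eps / (M + 1) * M) by (apply Rmult_le_compat_r; lra). lra.
  - destruct (HL y x) as [h1 h2]; [lra|]. rewrite Rabs_left in Hy by lra. rewrite Rabs_left1 by lra.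
    assert ((x - y) * M <= eps / (M + 1) * M) by (apply Rmult_le_compat_r; lra). lra.
Qed.

Lemma I1_pos : 0 < I n F f 1.
Proof.
  assert (HF01 : forall t, 0 <= F t <= 1) by (intros; split; [apply (F_ge0 F f Hc)| apply (F_le1 F f Hc)]).
  assert (Hbi : forall t, beta_integrand n F f 1 t = INR (n - 1) * (F t ^ (pred (n - 1)) * f t ^ 2)).
  { intros t. unfold beta_integrand. rewrite Derive_g. unfold gp1, gp. simpl. ring. }
  assert (Hgen := I_correct n F f Hex 1 ltac:(lia)).
  assert (Hhi := gen_loc_int _ _ Hgen).
  destruct (F_to0 F f Hc (1/2)) as [A HA]; [lra|].
  destruct (F_to1 F f Hc (1/4)) as [B HB]; [lra|].
  set (lo := A - 1). set (hi := B + 1).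
  assert (Flo : F lo < 1/2) by (assert (H := HA lo ltac:(unfold lo; lra)); apply Rabs_def2 in H; lra).
  assert (Fhi : 3/4 < F hi) by (assert (H := HB hi ltac:(unfold hi; lra)); apply Rabs_def2 in H; lra).
  destruct (IVT_gen F lo hi (1/2) F_cont) as [a [_ Ha]].
  { rewrite Rmin_left, Rmax_right; lra. }
  set (b := hi).
  assert (Hab : a < b).
  { destruct (Rlt_le_dec a b); auto. assert (F b <= F a) by (apply (F_mono F f Hc); auto). unfold b in *; lra. }
  assert (HINR : 1 <= INR (n - 1)) by (apply (le_INR 1); lia).
  set (d0 := (1/2) ^ (pred (n - 1))).
  assert (Hd0 : 0 < d0) by (apply pow_lt; lra).
  set (c0 := INR (n - 1) * d0).
  assert (Hc0 : 0 < c0) by (unfold c0; nra).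
  set (lam := (F b - F a) / (b - a)).
  assert (HFba : 1/4 < F b - F a) by (unfold b; lra).
  set (val := c0 * (2 * lam * (F b - F a) - lam ^ 2 * (b - a))).
  assert (Hval : 0 < val).
  { unfold val, lam. replace (2 * ((F b - F a) / (b - a)) * (F b - F a) - ((F b - F a) / (b - a)) ^ 2 * (b - a))
      with ((F b - F a) ^ 2 / (b - a)) by (field; lra).
    apply Rmult_lt_0_compat; auto. apply Rdiv_lt_0_compat; nra. }
  assert (Hmid : val <= RInt (beta_integrand n F f 1) a b).
  { assert (RInt (fun t => (c0 * 2 * lam) * f t + - (c0 * lam ^ 2)) a b <= RInt (beta_integrand n F f 1) a b).
    { apply RInt_le. lra. apply lin_ex. apply (f_int F f Hc). apply Hhi.
      intros t Ht. rewrite Hbi.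
      assert (Ft : 1/2 <= F t) by (rewrite <- Ha; apply (F_mono F f Hc); lra).
      assert (d0 <= F t ^ pred (n - 1)) by (apply pow_incr; lra).
      assert (c0 * (2 * lam * f t - lam ^ 2) <= c0 * f t ^ 2).
      { apply Rmult_le_compat_l. lra. assert (0 <= (f t - lam) ^ 2) by apply pow2_ge_0. nra. }
      assert (c0 * f t ^ 2 <= INR (n - 1) * (F t ^ pred (n - 1) * f t ^ 2)).
      { unfold c0. rewrite Rmult_assoc. apply Rmult_le_compat_l. lra. apply Rmult_le_compat_r. apply pow2_ge_0. auto. }
      nra. }
    rewrite lin_RInt in H by apply (f_int F f Hc). rewrite <- (F_diff F f Hc) in H.
    unfold val. nra. }
  assert (Hnn : forall t, 0 <= beta_integrand n F f 1 t).
  { intros t. rewrite Hbi. apply Rmult_le_pos. apply pos_INR. apply Rmult_le_pos. apply pow_le, HF01. apply pow2_ge_0. }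
  apply Rlt_le_trans with val; auto.
  apply (gen_ge _ _ val Hgen). exists a, b. intros A' B' HA' HB'.
  rewrite <- (@RInt_Chasles R_CompleteNormedModule _ A' a B') by apply Hhi.
  rewrite <- (@RInt_Chasles R_CompleteNormedModule _ a b B') by apply Hhi.
  assert (0 <= RInt (beta_integrand n F f 1) A' a) by (apply RInt_ge_0; [lra| apply Hhi| intros; apply Hnn]).
  assert (0 <= RInt (beta_integrand n F f 1) b B') by (apply RInt_ge_0; [lra| apply Hhi| intros; apply Hnn]).
  change (val <= RInt (beta_integrand n F f 1) A' a + (RInt (beta_integrand n F f 1) a b + RInt (beta_integrand n F f 1) b B')).
  lra.
Qed.
End Pos.

Lemma fold_ge (l : list R) x0 x : In x l -> x <= fold_right Rmax x0 l.
Proof.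
  induction l; simpl; intros H; [contradiction|]. destruct H as [<-|H].
  apply Rmax_l. eapply Rle_trans. apply IHl; auto. apply Rmax_r.
Qed.

Lemma fold_ge0 (l : list R) x0 : x0 <= fold_right Rmax x0 l.
Proof. induction l; simpl. lra. eapply Rle_trans. apply IHl. apply Rmax_r. Qed.

Lemma fold_in (l : list R) x0 : fold_right Rmax x0 l = x0 \/ In (fold_right Rmax x0 l) l.
Proof.
  induction l; simpl; auto. destruct (Rle_dec a (fold_right Rmax x0 l)) as [h|h].
  - rewrite Rmax_right by auto. destruct IHl as [H|H]. left; auto. right; right; auto.
  - rewrite Rmax_left by lra. right; left; auto.
Qed.

Lemma fold_lt (l : list R) x0 c : x0 < c -> (forall x, In x l -> x < c) -> fold_right Rmax x0 l < c.
Proof.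
  intros H0 H. destruct (fold_in l x0) as [->|Hi]; auto.
Qed.

Set Default Proof Using "All".
Section Comb.
Variables (n : nat) (F f : R -> R).
Hypothesis Hn : (2 <= n)%nat.

Notation bt := (beta n F f).
Notation B := (Bsum n F f).
Notation AA := (A n F f).
Notation MS := (Mstar n F f).

Lemma Bsum_S r : B (S r) = B r + bt (S r).
Proof.
  unfold Bsum. rewrite seq_S. rewrite map_app, fold_right_app. simpl.
  replace (1 + r)%nat with (S r) by lia.
  generalize (bt (S r)). intros v. induction (map bt (seq 1 r)); simpl. ring. rewrite IHl. ring.
Qed.

Lemma Bsum_0 : B 0 = 0.
Proof. reflexivity. Qed.

Lemma Bsum_1 : B 1 = bt 1.
Proof. rewrite Bsum_S, Bsum_0. ring. Qed.

Lemma B_mono_up r s : (r <= s)%nat -> (forall k, (r < k <= s)%nat -> 0 <= bt k) -> B r <= B s.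
Proof.
  intros Hrs H. induction s. replace r with 0%nat by lia. lra.
  destruct (Nat.eq_dec r (S s)). subst. lra.
  rewrite Bsum_S. assert (B r <= B s) by (apply IHs; [lia| intros; apply H; lia]).
  assert (0 <= bt (S s)) by (apply H; lia). lra.
Qed.

Lemma B_mono_down r s : (r <= s)%nat -> (forall k, (r < k <= s)%nat -> bt k <= 0) -> B s <= B r.
Proof.
  intros Hrs H. induction s. replace r with 0%nat by lia. lra.
  destruct (Nat.eq_dec r (S s)). subst. lra.
  rewrite Bsum_S. assert (B s <= B r) by (apply IHs; [lia| intros; apply H; lia]).
  assert (bt (S s) <= 0) by (apply H; lia). lra.
Qed.

Lemma A_alt r th : (1 <= r)%nat -> AA r th = B r * ((1 - th) / INR r + 2 * th / INR n).
Proof.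
  intros Hr. unfold A. assert (0 < INR r) by (apply lt_0_INR; lia).
  assert (0 < INR n) by (apply lt_0_INR; lia). field. lra.
Qed.

Lemma fac_pos r th : (1 <= r)%nat -> 0 <= th <= 1 -> 0 < (1 - th) / INR r + 2 * th / INR n.
Proof.
  intros Hr Hth. assert (0 < INR r) by (apply lt_0_INR; lia).
  assert (0 < INR n) by (apply lt_0_INR; lia).
  destruct (Rlt_le_dec th 1).
  - assert (0 < (1 - th) / INR r) by (apply Rdiv_lt_0_compat; lra).
    assert (0 <= 2 * th / INR n) by (apply Rdiv_le_0_compat; lra). lra.
  - assert (0 <= (1 - th) / INR r) by (apply Rdiv_le_0_compat; lra).
    assert (0 < 2 * th / INR n) by (apply Rdiv_lt_0_compat; lra). lra.
Qed.

Lemma A_slope r a b : (1 <= r)%nat -> AA r b - AA r a = (b - a) * (B r / INR r) * (2 * INR r / INR n - 1).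
Proof.
  intros Hr. unfold A. assert (0 < INR r) by (apply lt_0_INR; lia). assert (0 < INR n) by (apply lt_0_INR; lia). field. lra.
Qed.

Lemma A_incr r a b : (1 <= r)%nat -> 0 < B r -> (n < 2 * r)%nat -> a < b -> AA r a < AA r b.
Proof.
  intros Hr HB H2 Hab. assert (H := A_slope r a b Hr).
  assert (0 < INR r) by (apply lt_0_INR; lia). assert (0 < INR n) by (apply lt_0_INR; lia).
  assert (INR n < 2 * INR r) by (replace 2 with (INR 2) by reflexivity; rewrite <- mult_INR; apply lt_INR; lia).
  assert (0 < 2 * INR r / INR n - 1).
  { assert (1 < 2 * INR r / INR n). { apply (Rmult_lt_reg_r (INR n)); auto. unfold Rdiv. rewrite Rmult_assoc, Rinv_l; lra. } lra. }
  assert (0 < B r / INR r) by (apply Rdiv_lt_0_compat; auto).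
  assert (0 < (b - a) * (B r / INR r) * (2 * INR r / INR n - 1)).
  { apply Rmult_lt_0_compat; auto. apply Rmult_lt_0_compat; lra. }
  lra.
Qed.

Lemma A_nonincr r a b : (1 <= r)%nat -> 0 <= B r -> (2 * r <= n)%nat -> a <= b -> AA r b <= AA r a.
Proof.
  intros Hr HB H2 Hab. assert (H := A_slope r a b Hr).
  assert (0 < INR r) by (apply lt_0_INR; lia). assert (0 < INR n) by (apply lt_0_INR; lia).
  assert (2 * INR r <= INR n) by (replace 2 with (INR 2) by reflexivity; rewrite <- mult_INR; apply le_INR; lia).
  assert (2 * INR r / INR n - 1 <= 0).
  { assert (2 * INR r / INR n <= 1). { apply (Rmult_le_reg_r (INR n)); auto. unfold Rdiv. rewrite Rmult_assoc, Rinv_l; lra. } lra. }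
  assert (0 <= B r / INR r) by (apply Rdiv_le_0_compat; auto).
  assert ((b - a) * (B r / INR r) * (2 * INR r / INR n - 1) <= 0).
  { assert (0 <= (b - a) * (B r / INR r)) by (apply Rmult_le_pos; lra). nra. }
  lra.
Qed.

Lemma Mstar_ge r th : (1 <= r <= n - 1)%nat -> AA r th <= MS th.
Proof.
  intros Hr. unfold Mstar. apply fold_ge. apply in_map_iff. exists r. split; auto.
  apply in_seq. lia.
Qed.

Lemma Mstar_att th : exists r, (1 <= r <= n - 1)%nat /\ MS th = AA r th.
Proof.
  unfold Mstar. destruct (fold_in (map (fun r => AA r th) (seq 1 (n - 1))) (AA 1 th)) as [H|H].
  - exists 1%nat. split; auto. lia.
  - apply in_map_iff in H. destruct H as [r [Hr1 Hr2]]. apply in_seq in Hr2.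
    exists r. split. lia. auto.
Qed.

End Comb.

Section Cost.
Variables (c dc : R -> R) (xbar : R).
Hypothesis Hc : effort_cost c dc xbar.

Definition q x y := (c y - c x) / (y - x).

Lemma q_sym x y : x <> y -> q x y = q y x.
Proof. intros. unfold q. field. split; lra. Qed.

Lemma chord x z y : 0 <= x -> x < z -> z < y -> y <= xbar -> q x z < q x y /\ q x y < q z y.
Proof.
  intros h0 h1 h2 h3. destruct Hc as [_ [_ [_ [_ [_ [_ Hconv]]]]]].
  set (t := (y - z) / (y - x)).
  assert (Ht : 0 < t < 1).
  { unfold t. split. apply Rdiv_lt_0_compat; lra.
    apply (Rmult_lt_reg_r (y - x)). lra. unfold Rdiv. rewrite Rmult_assoc, Rinv_l; lra. }
  assert (Hz : t * x + (1 - t) * y = z) by (unfold t; field; repeat split; lra).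
  specialize (Hconv x y t ltac:(lra) ltac:(lra) ltac:(lra) Ht). rewrite Hz in Hconv.
  unfold q. split.
  - assert (E : c z - c x < (1 - t) * (c y - c x)) by lra.
    replace ((c y - c x) / (y - x)) with ((1 - t) * (c y - c x) / (z - x)) by (unfold t; field; repeat split; lra).
    unfold Rdiv. apply Rmult_lt_compat_r. apply Rinv_0_lt_compat; lra. exact E.
  - assert (E : t * (c y - c x) < c y - c z) by lra.
    replace ((c y - c x) / (y - x)) with (t * (c y - c x) / (y - z)) by (unfold t; field; repeat split; lra).
    unfold Rdiv. apply Rmult_lt_compat_r. apply Rinv_0_lt_compat; lra. exact E.
Qed.

Lemma dc_le x w : 0 <= x -> x < w -> w <= xbar -> dc x <= q x w.
Proof.
  intros h0 h1 h2. destruct Hc as [Hxb [_ [_ [_ [_ [Hd _]]]]]].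
  destruct (Rle_dec (dc x) (q x w)) as [|Hn]; auto. exfalso. apply Rnot_le_lt in Hn.
  assert (Hl := Hd x ltac:(lra)).
  assert (Hb : locally (dc x) (ball (dc x) (dc x - q x w))).
  { apply (locally_ball (dc x) (mkposreal (dc x - q x w) ltac:(lra))). }
  specialize (Hl _ Hb). destruct Hl as [del Hdel].
  set (y := x + Rmin (del / 2) ((w - x) / 2)).
  assert (0 < Rmin (del / 2) ((w - x) / 2)).
  { apply Rmin_glb_lt. generalize (cond_pos del); lra. lra. }
  assert (Hyd : y - x = Rmin (del / 2) ((w - x) / 2)) by (unfold y; ring).
  assert (y <= x + (w - x) / 2) by (unfold y; generalize (Rmin_r (del / 2) ((w - x) / 2)); lra).
  assert (y <= x + del / 2) by (unfold y; generalize (Rmin_l (del / 2) ((w - x) / 2)); lra).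
  assert (Hy : ball (dc x) (dc x - q x w) ((c y - c x) / (y - x))).
  { apply Hdel. change (Rabs (y - x) < del). rewrite Rabs_right by lra.
    generalize (cond_pos del); lra. split. split; lra. lra. }
  change (Rabs ((c y - c x) / (y - x) - dc x) < dc x - q x w) in Hy.
  apply Rabs_def2 in Hy.
  assert (q x y < q x w) by (apply (chord x y w); lra).
  unfold q in *. lra.
Qed.

Lemma dc_ge w y : 0 <= w -> w < y -> y <= xbar -> q w y <= dc y.
Proof.
  intros h0 h1 h2. destruct Hc as [Hxb [_ [_ [_ [_ [Hd _]]]]]].
  destruct (Rle_dec (q w y) (dc y)) as [|Hn]; auto. exfalso. apply Rnot_le_lt in Hn.
  assert (Hl := Hd y ltac:(lra)).
  assert (Hb : locally (dc y) (ball (dc y) (q w y - dc y))).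
  { apply (locally_ball (dc y) (mkposreal (q w y - dc y) ltac:(lra))). }
  specialize (Hl _ Hb). destruct Hl as [del Hdel].
  set (z := y - Rmin (del / 2) ((y - w) / 2)).
  assert (0 < Rmin (del / 2) ((y - w) / 2)).
  { apply Rmin_glb_lt. generalize (cond_pos del); lra. lra. }
  assert (Hzd : y - z = Rmin (del / 2) ((y - w) / 2)) by (unfold z; ring).
  assert (y - (y - w) / 2 <= z) by (unfold z; generalize (Rmin_r (del / 2) ((y - w) / 2)); lra).
  assert (y - del / 2 <= z) by (unfold z; generalize (Rmin_l (del / 2) ((y - w) / 2)); lra).
  assert (Hz : ball (dc y) (q w y - dc y) ((c z - c y) / (z - y))).
  { apply Hdel. change (Rabs (z - y) < del). rewrite Rabs_left by lra.
    generalize (cond_pos del); lra. split. split; lra. lra. }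
  change (Rabs ((c z - c y) / (z - y) - dc y) < q w y - dc y) in Hz.
  apply Rabs_def2 in Hz.
  assert (q w y < q z y) by (apply (chord w z y); lra).
  assert (q z y = (c z - c y) / (z - y)) by (unfold q; field; lra).
  lra.
Qed.

Lemma dc_strict x y : 0 <= x -> x < y -> y <= xbar -> dc x < dc y.
Proof.
  intros. set (w := (x + y) / 2).
  assert (dc x <= q x w) by (apply dc_le; unfold w; lra).
  assert (q w y <= dc y) by (apply dc_ge; unfold w; lra).
  destruct (chord x w y) as [h1 h2]; unfold w; try lra.
Qed.
End Cost.

Lemma half_floor n r : (r <= n / 2)%nat -> (2 * r <= n)%nat.
Proof. intros H. assert (H2 := Nat.mul_div_le n 2). lia. Qed.

Lemma half_ceil n r : ((n + 1) / 2 < r)%nat -> (n < 2 * r)%nat.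
Proof.
  intros H. assert (H1 := Nat.div_mod (n + 1) 2 ltac:(lia)).
  assert (H2 := Nat.mod_upper_bound (n + 1) 2 ltac:(lia)). lia.
Qed.

Lemma C_pos a b : 0 < Binomial.C a b.
Proof.
  unfold Binomial.C. apply Rdiv_lt_0_compat. apply lt_0_INR, lt_O_fact.
  apply Rmult_lt_0_compat; apply lt_0_INR, lt_O_fact.
Qed.

Set Default Proof Using "All".
Section Main.
Variables (n : nat) (F f : R -> R).
Hypothesis Hn : (2 <= n)%nat.

Notation bt := (beta n F f).
Notation B := (Bsum n F f).
Notation AA := (A n F f).
Notation MS := (Mstar n F f).

Lemma A_le_of2 r r' th : (1 <= r)%nat -> (r <= r')%nat -> 0 <= th <= 1 ->
  B r / INR r <= B r' / INR r' -> 0 < B r' -> AA r th <= AA r' th.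
Proof.
  intros Hr Hrr' Hth Hq HB.
  assert (0 < INR r) by (apply lt_0_INR; lia). assert (INR r <= INR r') by (apply le_INR; lia).
  assert (0 < INR n) by (apply lt_0_INR; lia).
  assert (HBB : B r <= B r').
  { destruct (Rle_dec (B r) 0). lra.
    replace (B r) with (INR r * (B r / INR r)) by (field; lra).
    replace (B r') with (INR r' * (B r' / INR r')) by (field; lra).
    assert (0 <= B r' / INR r') by (apply Rdiv_le_0_compat; lra).
    apply Rle_trans with (INR r * (B r' / INR r')). apply Rmult_le_compat_l; lra.
    apply Rmult_le_compat_r; lra. }
  assert (E1 : AA r th = (1 - th) * (B r / INR r) + (2 * th / INR n) * B r) by (unfold A; field; lra).
  assert (E2 : AA r' th = (1 - th) * (B r' / INR r') + (2 * th / INR n) * B r') by (unfold A; field; lra).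
  rewrite E1, E2. assert (0 <= 2 * th / INR n) by (apply Rdiv_le_0_compat; lra).
  apply Rplus_le_compat; apply Rmult_le_compat_l; lra.
Qed.

Lemma A_le_of r r' th : (1 <= r')%nat -> (r' <= r)%nat -> 0 <= th <= 1 ->
  B r <= B r' -> 0 < B r' -> AA r th <= AA r' th.
Proof.
  intros Hr' Hrr' Hth HBB HB.
  rewrite !(A_alt n F f Hn) by lia.
  assert (h1 := fac_pos n F f Hn r th ltac:(lia) Hth). assert (h2 := fac_pos n F f Hn r' th ltac:(lia) Hth).
  destruct (Rle_dec (B r) 0). nra.
  assert (0 < INR r') by (apply lt_0_INR; lia). assert (INR r' <= INR r) by (apply le_INR; lia).
  assert ((1 - th) / INR r <= (1 - th) / INR r').
  { unfold Rdiv. apply Rmult_le_compat_l. lra. apply Rinv_le_contravar; lra. }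
  apply Rmult_le_compat; lra.
Qed.

Lemma A_nonpos r th : (1 <= r)%nat -> 0 <= th <= 1 -> B r <= 0 -> AA r th <= 0.
Proof.
  intros. rewrite (A_alt n F f Hn) by lia. assert (h := fac_pos n F f Hn r th H H0). nra.
Qed.

Lemma A_posv r th : (1 <= r)%nat -> 0 <= th <= 1 -> 0 < B r -> 0 < AA r th.
Proof.
  intros. rewrite (A_alt n F f Hn) by lia. assert (h := fac_pos n F f Hn r th H H0). nra.
Qed.

Lemma A_affine r th : (1 <= r)%nat -> AA r th = (1 - th) * AA r 0 + th * AA r 1.
Proof.
  intros. unfold A. assert (0 < INR r) by (apply lt_0_INR; lia).
  assert (0 < INR n) by (apply lt_0_INR; lia). field. lra.
Qed.

Lemma xss_nonincr (c dc : R -> R) xbar xss : effort_cost c dc xbar ->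
  equilibrium_effort n F f dc xbar xss -> nonincreasing_on01 MS -> nonincreasing_on01 xss.
Proof.
  intros Hc He HM a b Ha Hab Hb.
  destruct (He a ltac:(lra)) as [Ha1 Ha2]. destruct (He b ltac:(lra)) as [Hb1 Hb2].
  destruct (Rle_dec (xss b) (xss a)) as [|Hn']; auto. exfalso. apply Rnot_le_lt in Hn'.
  assert (dc (xss a) < dc (xss b)) by (apply (dc_strict c dc xbar Hc); lra).
  specialize (HM a b Ha Hab Hb). lra.
Qed.

Lemma xss_incr (c dc : R -> R) xbar xss lo hi : effort_cost c dc xbar ->
  equilibrium_effort n F f dc xbar xss -> 0 <= lo -> hi <= 1 -> increasing_on MS lo hi -> increasing_on xss lo hi.
Proof.
  intros Hc He Hlo Hhi HM a b Ha Hab Hb.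
  destruct (He a ltac:(lra)) as [Ha1 Ha2]. destruct (He b ltac:(lra)) as [Hb1 Hb2].
  specialize (HM a b Ha Hab Hb).
  destruct (Rlt_le_dec (xss a) (xss b)) as [|Hn']; auto. exfalso.
  destruct (Rle_lt_or_eq_dec _ _ Hn') as [Hlt|Heq].
  - assert (dc (xss b) < dc (xss a)) by (apply (dc_strict c dc xbar Hc); lra). lra.
  - rewrite Heq in Hb2. lra.
Qed.

End Main.

Theorem corollary2 (n : nat) (F f c dc : R -> R) (xbar : R) :
  (2 <= n)%nat ->
  cdf_with_density F f ->
  (forall r, (1 <= r <= n)%nat ->
     ex_RInt_gen (beta_integrand n F f r) (Rbar_locally m_infty) (Rbar_locally p_infty)) ->
  effort_cost c dc xbar ->
  unimodal f ->
  unimodal_failure_rate F f ->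
  (* (i) *)
  (forall rhat, (1 <= rhat <= n)%nat -> 0 < beta n F f rhat ->
     (forall r, (rhat < r <= n)%nat -> beta n F f r <= 0) ->
     (rhat <= n / 2)%nat ->
     nonincreasing_on01 (Mstar n F f) /\
     (forall xss, equilibrium_effort n F f dc xbar xss -> nonincreasing_on01 xss)) /\
  (* (ii) *)
  (forall r0, (1 <= r0 <= n - 1)%nat ->
     (forall r, (1 <= r <= n - 1)%nat -> Bsum n F f r / INR r <= Bsum n F f r0 / INR r0) ->
     ((n + 1) / 2 < r0)%nat ->
     increasing_on (Mstar n F f) 0 1 /\
     (forall xss, equilibrium_effort n F f dc xbar xss -> increasing_on xss 0 1)) /\
  (* (iii) *)
  (forall rhat, (1 <= rhat <= n)%nat -> 0 < beta n F f rhat ->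
     (forall r, (rhat < r <= n)%nat -> beta n F f r <= 0) ->
     ((n + 1) / 2 < rhat)%nat ->
     exists thetabar, 0 <= thetabar < 1 /\
       increasing_on (Mstar n F f) thetabar 1 /\
       (forall xss, equilibrium_effort n F f dc xbar xss -> increasing_on xss thetabar 1)).
Proof.
  intros Hn Hc Hex Hcost Hunim _.
  assert (Hsign : forall k s, (1 <= k)%nat -> (k < s)%nat -> (s <= n)%nat -> 0 < beta n F f s -> 0 <= beta n F f k).
  { intros k s Hk Hks Hs Hb. rewrite (beta_I n F f k). rewrite (beta_I n F f s) in Hb.
    assert (h1 := C_pos (n - 1) (k - 1)). assert (h2 := C_pos (n - 1) (s - 1)).
    assert (0 < I n F f s) by nra.
    assert (0 <= I n F f k) by (apply (sign_pos n F f Hn Hc Hex Hunim k s); auto).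
    nra. }
  assert (Hbn : beta n F f n <= 0).
  { rewrite (beta_I n F f n). assert (h1 := C_pos (n - 1) (n - 1)).
    assert (I n F f n <= 0) by (apply (I_n_nonpos n F f Hn Hc Hex Hunim)). nra. }
  assert (Hb1 : 0 < beta n F f 1).
  { rewrite (beta_I n F f 1). assert (h1 := C_pos (n - 1) (1 - 1)).
    assert (0 < I n F f 1) by (apply (I1_pos n F f Hn Hc Hex Hunim)). nra. }
  split; [|split].
  -
    intros rhat Hr Hbr Hafter Hhalf.
    assert (H2r := half_floor n rhat Hhalf).
    assert (HBnn : forall r, (r <= rhat)%nat -> 0 <= Bsum n F f r).
    { intros r Hrr. rewrite <- (Bsum_0 n F f Hn). apply (B_mono_up n F f Hn). lia.
      intros k Hk. destruct (Nat.eq_dec k rhat) as [->|Hne]. lra.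
      apply (Hsign k rhat); auto; lia. }
    assert (HBr : 0 < Bsum n F f rhat).
    { destruct rhat as [|rh]. lia. rewrite (Bsum_S n F f Hn). assert (0 <= Bsum n F f rh) by (apply HBnn; lia). lra. }
    assert (HBd : forall r, (rhat <= r <= n)%nat -> Bsum n F f r <= Bsum n F f rhat).
    { intros r Hrr. apply (B_mono_down n F f Hn). lia. intros k Hk. apply Hafter. lia. }
    assert (HM : nonincreasing_on01 (Mstar n F f)).
    { intros a b Ha Hab Hb.
      destruct (Mstar_att n F f Hn b) as [r [Hr1 Hrb]]. rewrite Hrb.
      destruct (le_lt_dec r rhat).
      - apply Rle_trans with (A n F f r a).
        apply (A_nonincr n F f Hn); [lia | apply HBnn; lia | lia | lra].
        apply (Mstar_ge n F f Hn); lia.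
      - apply Rle_trans with (A n F f rhat b).
        apply (A_le_of n F f Hn); [lia | lia | lra | apply HBd; lia | lra].
        apply Rle_trans with (A n F f rhat a).
        apply (A_nonincr n F f Hn); [lia | lra | lia | lra].
        apply (Mstar_ge n F f Hn); lia. }
    split; auto. intros xss He. apply (xss_nonincr n F f Hn c dc xbar xss Hcost He HM).
  -
    intros r0 Hr0 Hmax Hhalf.
    assert (H2r := half_ceil n r0 Hhalf).
    assert (HB0 : 0 < Bsum n F f r0).
    { assert (h := Hmax 1%nat ltac:(lia)). rewrite (Bsum_1 n F f Hn) in h. simpl in h.
      assert (0 < INR r0) by (apply lt_0_INR; lia).
      assert (0 < Bsum n F f r0 / INR r0) by (unfold Rdiv in *; lra).
      replace (Bsum n F f r0) with (Bsum n F f r0 / INR r0 * INR r0) by (field; lra). nra. }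
    assert (HM : increasing_on (Mstar n F f) 0 1).
    { intros a b Ha Hab Hb.
      destruct (Mstar_att n F f Hn a) as [r [Hr1 Hra]]. rewrite Hra.
      destruct (le_lt_dec r r0).
      - apply Rle_lt_trans with (A n F f r0 a).
        apply (A_le_of2 n F f Hn); auto; try lia. lra.
        apply Rlt_le_trans with (A n F f r0 b).
        apply (A_incr n F f Hn); auto; lia.
        apply (Mstar_ge n F f Hn); lia.
      - destruct (Rle_dec (Bsum n F f r) 0).
        + apply Rle_lt_trans with 0. apply (A_nonpos n F f Hn); auto; try lia; lra.
          apply Rlt_le_trans with (A n F f r0 b). apply (A_posv n F f Hn); auto; try lia; lra.
          apply (Mstar_ge n F f Hn); lia.
        + apply Rlt_le_trans with (A n F f r b).
          apply (A_incr n F f Hn); auto; try lia; lra.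
          apply (Mstar_ge n F f Hn); lia. }
    split; auto. intros xss He. apply (xss_incr n F f Hn c dc xbar xss 0 1 Hcost He); auto; lra.
  -
    intros rhat Hr Hbr Hafter Hhalf.
    assert (H2r := half_ceil n rhat Hhalf).
    assert (Hrn : (rhat <= n - 1)%nat).
    { destruct (Nat.eq_dec rhat n). subst. lra. lia. }
    assert (HBup : forall r, (r < rhat)%nat -> Bsum n F f r < Bsum n F f rhat).
    { intros r Hrr. destruct rhat as [|rh]. lia. rewrite (Bsum_S n F f Hn).
      assert (Bsum n F f r <= Bsum n F f rh).
      { apply (B_mono_up n F f Hn). lia. intros k Hk. apply (Hsign k (S rh)); auto; lia. }
      lra. }
    assert (HBr : 0 < Bsum n F f rhat) by (rewrite <- (Bsum_0 n F f Hn); apply HBup; lia).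
    assert (HBd : forall r, (rhat <= r <= n)%nat -> Bsum n F f r <= Bsum n F f rhat).
    { intros r Hrr. apply (B_mono_down n F f Hn). lia. intros k Hk. apply Hafter. lia. }
    set (d0 := fun r => A n F f rhat 0 - A n F f r 0).
    set (d1 := fun r => A n F f rhat 1 - A n F f r 1).
    set (th := fun r => Rabs (d0 r) / (d1 r + Rabs (d0 r))).
    assert (Hd1 : forall r, (1 <= r < rhat)%nat -> 0 < d1 r).
    { intros r Hrr. unfold d1. rewrite !(A_alt n F f Hn) by lia.
      assert (0 < INR n) by (apply lt_0_INR; lia).
      replace ((1 - 1) / INR rhat + 2 * 1 / INR n) with (2 / INR n) by (field; split; [lra| apply not_0_INR; lia]).
      replace ((1 - 1) / INR r + 2 * 1 / INR n) with (2 / INR n) by (field; split; [lra| apply not_0_INR; lia]).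
      assert (0 < 2 / INR n) by (apply Rdiv_lt_0_compat; lra).
      assert (Bsum n F f r < Bsum n F f rhat) by (apply HBup; lia). nra. }
    assert (Hth1 : forall r, (1 <= r < rhat)%nat -> 0 <= th r < 1).
    { intros r Hrr. specialize (Hd1 r Hrr). unfold th. assert (0 <= Rabs (d0 r)) by apply Rabs_pos.
      split. apply Rdiv_le_0_compat; lra.
      apply (Rmult_lt_reg_r (d1 r + Rabs (d0 r))). lra. unfold Rdiv. rewrite Rmult_assoc, Rinv_l; lra. }
    assert (Hcmp : forall r t, (1 <= r < rhat)%nat -> th r <= t <= 1 -> A n F f r t <= A n F f rhat t).
    { intros r t Hrr Ht. specialize (Hd1 r Hrr). assert (h0 := Rabs_pos (d0 r)).
      rewrite (A_affine n F f Hn r t), (A_affine n F f Hn rhat t) by lia.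
      assert (h1 : th r * (d1 r + Rabs (d0 r)) = Rabs (d0 r)) by (unfold th; field; lra).
      assert (h2 : - Rabs (d0 r) <= d0 r) by (generalize (Rle_abs (- d0 r)); rewrite Rabs_Ropp; lra).
      assert (t * (d1 r + Rabs (d0 r)) >= Rabs (d0 r)) by nra.
      unfold d0, d1 in *. nra. }
    set (tb := fold_right Rmax 0 (map th (seq 1 (rhat - 1)))).
    assert (Htb0 : 0 <= tb) by apply fold_ge0.
    assert (Htb1 : tb < 1).
    { apply fold_lt. lra. intros x Hx. apply in_map_iff in Hx. destruct Hx as [r [<- Hr']].
      apply in_seq in Hr'. apply Hth1. lia. }
    assert (Htbr : forall r, (1 <= r < rhat)%nat -> th r <= tb).
    { intros r Hrr. apply fold_ge. apply in_map_iff. exists r. split; auto. apply in_seq. lia. }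
    assert (HM : increasing_on (Mstar n F f) tb 1).
    { intros a b Ha Hab Hb.
      destruct (Mstar_att n F f Hn a) as [r [Hr1 Hra]]. rewrite Hra.
      destruct (le_lt_dec rhat r).
      + destruct (Rle_dec (Bsum n F f r) 0).
        * apply Rle_lt_trans with 0. apply (A_nonpos n F f Hn); auto; try lia; lra.
          apply Rlt_le_trans with (A n F f rhat b). apply (A_posv n F f Hn); auto; try lia; lra.
          apply (Mstar_ge n F f Hn); lia.
        * apply Rlt_le_trans with (A n F f r b).
          apply (A_incr n F f Hn); auto; try lia; lra.
          apply (Mstar_ge n F f Hn); lia.
      + apply Rle_lt_trans with (A n F f rhat a).
        apply Hcmp. lia. assert (th r <= tb) by (apply Htbr; lia). lra.
        apply Rlt_le_trans with (A n F f rhat b).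
        apply (A_incr n F f Hn); auto; lia.
        apply (Mstar_ge n F f Hn); lia. }
    exists tb. split; [lra|]. split; auto.
    intros xss He. apply (xss_incr n F f Hn c dc xbar xss tb 1 Hcost He); auto; lra.
Qed.
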